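(* For any integers $n, d \geq 2$ with $\gcd(d,n) = 1$, we have $\max S_{d,n} = nd - n - d$.
   Context: For integers $d,n \geq 2$ with $\gcd(n,d)=1$, let $n^\ast \in \{1,\dots,d-1\}$ be the unique integer with $n^\ast \equiv -n \pmod d$, and define $S_{d,n} = \{ n^\ast + jd : j \in \mathbb{Z}_{\geq 0},\ n^\ast + jd < n(d-1)\}$. *)

(* Defs.v *)
From Stdlib Require Import ZArith.
Open Scope Z_scope.

(* n^* : the representative of -n mod d in {0,..,d-1}; equals the unique
   element of {1,..,d-1} congruent to -n when gcd(n,d)=1 and d >= 2. *)
Definition nstar (d n : Z) : Z := Z.modulo (- n) d.

Definition S_dn (d n : Z) (x : Z) : Prop :=
  exists j : Z, 0 <= j /\ x = nstar d n + j * d /\ x < n * (d - 1).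

Definition is_max (P : Z -> Prop) (m : Z) : Prop :=
  P m /\ forall x, P x -> x <= m.

(* Main.v *)
Require Import Defs.
From Stdlib Require Import ZArith Lia.
Open Scope Z_scope.

Theorem lemma3p3 (n d : Z) (hn : 2 <= n) (hd : 2 <= d) (hg : Z.gcd d n = 1) :
  is_max (S_dn d n) (n * d - n - d).
Proof.
  unfold is_max, S_dn, nstar.
  assert (Hdm := Z.div_mod (-n) d ltac:(lia)).
  assert (Hr := Z.mod_pos_bound (-n) d ltac:(lia)).
  set (r := (-n) mod d) in *. set (q := (-n)/d) in *.
  split.
  - exists (n + q - 1).
    assert (Hj : 0 < n + q).
    { assert (H1 : 0 < d * (n + q)) by nia.
      apply (Z.mul_pos_cancel_l d); lia. }
    split; [lia|]. split; nia.
  - intros x [j [Hj [Hx Hlt]]].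
    assert (j < n + q).
    { apply (Z.mul_lt_mono_pos_l d); lia. }
    nia.
Qed.
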